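(* Let $\kappa$ be an infinite limit cardinal. Then there exists a connected graph $G$ with $|V_G| = \kappa$ and chromatic number $\chi(G) = \kappa$ such that the complete graph $K_\kappa$ is not a minor of $G$.
   Context: A graph is a pair $G=(V,E)$ with $E \subseteq [V]^2$. $K_\kappa$ is the complete graph $(\kappa,[\kappa]^2)$. The chromatic number $\chi(G)$ is the least cardinal $\mu$ such that there is a map $c:V\to\mu$ with $c(u)\neq c(v)$ whenever $\{u,v\}\in E$. A graph $H$ is a minor of $G$ if there are pairwise disjoint non-empty sets $(X_u)_{u\in V_H}$ of vertices of $G$, each inducing a connected subgraph of $G$, such that for every edge $\{u,v\}$ of $H$ there are $x\in X_u$, $y\in X_v$ with $\{x,y\}$ an edge of $G$. *)

(* Defs.v *)
(* graphs on arbitrary (possibly infinite) types, cardinals as types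
   compared via injections. *)
From Stdlib Require Import Relations Relation_Operators.

Definition le_card (A B : Type) : Prop :=
  exists f : A -> B, forall x y, f x = f y -> x = y.
Definition lt_card (A B : Type) : Prop := le_card A B /\ ~ le_card B A.
Definition same_card (A B : Type) : Prop :=
  exists (f : A -> B) (g : B -> A),
    (forall x, g (f x) = x) /\ (forall y, f (g y) = y).

Definition infinite_card (K : Type) : Prop := le_card nat K.

(* K is a limit cardinal: not the successor of any smaller cardinal, i.e.
   for every cardinal mu < |K| there is a cardinal strictly between mu and |K|. *)
Definition limit_card (K : Type) : Prop :=
  forall mu : Type, lt_card mu K ->
    exists nu : Type, lt_card mu nu /\ lt_card nu K.

Definition is_graph {V : Type} (adj : V -> V -> Prop) : Prop :=
  (forall u v, adj u v -> adj v u) /\ (forall v, ~ adj v v).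

Definition connected_in {V : Type} (adj : V -> V -> Prop) (X : V -> Prop) : Prop :=
  forall x y, X x -> X y ->
    clos_refl_trans V (fun a b => X a /\ X b /\ adj a b) x y.

Definition connected {V : Type} (adj : V -> V -> Prop) : Prop :=
  connected_in adj (fun _ => True).

Definition proper_coloring {V C : Type} (adj : V -> V -> Prop) (c : V -> C) : Prop :=
  forall u v, adj u v -> c u <> c v.

Definition chromatic_number_is {V : Type} (adj : V -> V -> Prop) (K : Type) : Prop :=
  (exists c : V -> K, proper_coloring adj c) /\
  (forall mu : Type, lt_card mu K -> ~ exists c : V -> mu, proper_coloring adj c).

Definition is_minor {VH VG : Type} (adjH : VH -> VH -> Prop) (adjG : VG -> VG -> Prop) : Prop :=
  exists X : VH -> VG -> Prop,
    (forall u v x, u <> v -> X u x -> X v x -> False) /\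
    (forall u, exists x, X u x) /\
    (forall u, connected_in adjG (X u)) /\
    (forall u v, adjH u v -> exists x y, X u x /\ X v y /\ adjG x y).

Definition complete_adj (K : Type) : K -> K -> Prop := fun u v => u <> v.

(* Main.v *)
Require Import Defs.
From Stdlib Require Import Classical ClassicalEpsilon ProofIrrelevance FunctionalExtensionality Lia List Arith PeanoNat.
From Stdlib Require Import Relations Relation_Operators.
From mathcomp Require Import ssreflect ssrfun ssrbool.
From mathcomp Require eqtype choice boolp wochoice classical_sets cardinality.

Unset Implicit Arguments.

Lemma le_card_refl A : le_card A A.
Proof. by exists id. Qed.

Lemma le_card_trans A B C : le_card A B -> le_card B C -> le_card A C.
Proof.
move=> [f Hf] [g Hg]; exists (fun x => g (f x)) => x y /Hg /Hf //.
Qed.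

Lemma le_card_sub (A : Type) (P Q : A -> Prop) (H : forall x, P x -> Q x) :
  le_card {x | P x} {x | Q x}.
Proof.
exists (fun x => exist Q (proj1_sig x) (H _ (proj2_sig x))).
move=> [x px] [y py] /= E; inversion E; subst; f_equal; apply: proof_irrelevance.
Qed.

Lemma le_card_sig A (P : A -> Prop) : le_card {x | P x} A.
Proof. exists (@proj1_sig _ _) => [[x px] [y py]] /= E; subst; f_equal; apply: proof_irrelevance. Qed.

Lemma sig_eq A (P : A -> Prop) (x y : {z | P z}) : proj1_sig x = proj1_sig y -> x = y.
Proof. case: x => x px; case: y => y py /= E; subst; f_equal; apply: proof_irrelevance. Qed.

Section Shift.
Variable A : Type.
Variable g : nat -> A.
Hypothesis ginj : forall m n, g m = g n -> m = n.

Definition shift (x : A) : A :=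
  match excluded_middle_informative (exists n, g n = x) with
  | left H => g (S (proj1_sig (constructive_indefinite_description _ H)))
  | right _ => x
  end.

Lemma shift_ne0 x : shift x <> g 0.
Proof.
rewrite /shift; case: excluded_middle_informative => [H|H].
  case: constructive_indefinite_description => n /= _ /ginj //.
move=> E; apply: H; exists 0; by rewrite E.
Qed.

Lemma shift_inj x y : shift x = shift y -> x = y.
Proof.
rewrite /shift; case: excluded_middle_informative => [H|H];
  case: excluded_middle_informative => [H'|H'].
- case: constructive_indefinite_description => n /= <-.
  case: constructive_indefinite_description => m /= <-.
  by move=> /ginj [->].
- case: constructive_indefinite_description => n /= _ E.
  by case: H'; exists (S n).
- case: constructive_indefinite_description => n /= _ E.
  by case: H; exists (S n).
- done.
Qed.

Definition swap (a b x : A) : A :=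
  match excluded_middle_informative (x = a) with
  | left _ => b
  | right _ => match excluded_middle_informative (x = b) with
               | left _ => a | right _ => x end end.

Lemma swap_invol a b x : swap a b (swap a b x) = x.
Proof.
rewrite /swap.
case: (excluded_middle_informative (x = a)) => [->|H].
  case: excluded_middle_informative => [->//|_].
  by case: excluded_middle_informative.
case: (excluded_middle_informative (x = b)) => [->|H'].
  by case: excluded_middle_informative.
case: excluded_middle_informative => //.
by case: excluded_middle_informative.
Qed.

Lemma swap_a a b : swap a b a = b.
Proof. by rewrite /swap; case: excluded_middle_informative. Qed.

End Shift.
Arguments shift {A}.
Arguments swap {A}.
Arguments shift_inj {A g}.
Arguments shift_ne0 {A g}.
Arguments swap_invol {A}.
Arguments swap_a {A}.

Lemma inf_remove (A : Type) (Hinf : le_card nat A) (p : A) : le_card A {x : A | x <> p}.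
Proof.
case: Hinf => g ginj.
pose F x := swap p (g 0) (shift g (swap p (g 0) x)).
have HF : forall x, F x <> p.
  move=> x E.
  have : shift g (swap p (g 0) x) = g 0.
    by rewrite -(swap_invol p (g 0) (shift g _)) -/(F x) E swap_a.
  exact: shift_ne0.
exists (fun x => exist _ (F x) (HF x)) => x y [] E.
have := f_equal (swap p (g 0)) E; rewrite !swap_invol => /(shift_inj ginj) E'.
by rewrite -(swap_invol p (g 0) x) E' swap_invol.
Qed.

Lemma option_le (A : Type) (Hinf : le_card nat A) : le_card (option A) A.
Proof.
case: Hinf => g ginj.
exists (fun o => match o with None => g 0 | Some x => shift g x end).
move=> [x|] [y|] //.
- by move=> /(shift_inj ginj) ->.
- by move=> /(shift_ne0 ginj).
- by move=> E; symmetry in E; move: E => /(shift_ne0 ginj).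
Qed.
Arguments le_card_trans {A B C}.
Arguments le_card_sub {A P Q}.
Arguments sig_eq {A P x y}.
Arguments inf_remove {A}.
Arguments option_le {A}.

Unset Implicit Arguments.

Definition hub_adj {V : Type} (h : V) (E : V -> V -> Prop) (x y : V) : Prop :=
  x <> y /\ (x = h \/ y = h \/ E x y).

Lemma no_minor (K V : Type) (Hinf : le_card nat K) (h : V) (E : V -> V -> Prop)
  (Erefl : forall x, E x x) (Etr : forall x y z, E x y -> E y z -> E x z)
  (Hsmall : forall x, ~ le_card K {y | E x y}) :
  ~ is_minor (complete_adj K) (hub_adj h E).
Proof.
move=> [X [Hdisj [Hne [Hconn Hadj]]]].
have step1 : forall u, ~ X u h -> forall x y, X u x -> X u y -> E x y.
  move=> u nh x y xu yu; have := Hconn u x y xu yu.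
  elim => [a b [Xa [Xb [_ H]]]| a | a b c _ IH1 _ IH2].
  - by case: H => [Ea|[Eb|//]]; [rewrite Ea in Xa | rewrite Eb in Xb].
  - exact: Erefl.
  - exact: Etr IH1 IH2.
have [u0 Hu0] : exists u0, ~ X u0 h.
  case: Hinf => g ginj.
  case: (classic (X (g 0) h)) => H0; last by exists (g 0).
  exists (g 1) => H1; apply: (Hdisj (g 0) (g 1) h) => // /ginj //.
have [x0 Hx0] := Hne u0.
have Hmap : forall u, ~ X u h -> exists y, X u y /\ E x0 y.
  move=> u nh; case: (classic (u = u0)) => [->|neq]; first by exists x0; split => //; apply: Erefl.
  have [x [y [Xx [Xy [_ Hxy]]]]] := Hadj u0 u (fun e => neq (eq_sym e)).
  case: Hxy => [Ex|[Ey|Exy]].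
  - by rewrite Ex in Xx.
  - by rewrite Ey in Xy.
  exists y; split => //; apply: Etr (step1 u0 Hu0 x0 x Hx0 Xx) Exy.
pose F (u : {u | ~ X u h}) : {y | E x0 y} :=
  let H := constructive_indefinite_description _ (Hmap _ (proj2_sig u)) in
  exist _ (proj1_sig H) (proj2 (proj2_sig H)).
have Finj : forall u v, F u = F v -> u = v.
  move=> [u hu] [v hv] EF.
  have E' := f_equal (@proj1_sig _ _) EF; rewrite /F /= in E'.
  have Xa := proj1 (proj2_sig (constructive_indefinite_description _ (Hmap u hu))).
  have Xb := proj1 (proj2_sig (constructive_indefinite_description _ (Hmap v hv))).
  rewrite E' in Xa.
  apply: sig_eq => /=; apply: NNPP => neq; exact: (Hdisj u v _ neq Xa Xb).
have HK : le_card K {u | ~ X u h}.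
  case: (classic (exists p, X p h)) => [[p Hp]|Hn].
  - apply: le_card_trans (inf_remove Hinf p) _.
    apply: le_card_sub => x neq Xx; exact: (Hdisj x p h).
  - exists (fun u => exist (fun u => ~ X u h) u (fun H => Hn (ex_intro _ u H))).
    by move=> x y [].
apply: (Hsmall x0); apply: le_card_trans HK _; by exists F.
Qed.

Lemma hub_graph {V : Type} (h : V) (E : V -> V -> Prop) (Esym : forall x y, E x y -> E y x) :
  is_graph (hub_adj h E).
Proof.
split.
- move=> u v [neq H]; split; first by move=> e; apply: neq.
  by case: H => [?|[?|?]]; [right; left|left|right; right; apply: Esym].
- by move=> v [].
Qed.

Lemma hub_connected {V : Type} (h : V) (E : V -> V -> Prop) : connected (hub_adj h E).
Proof.
have toh : forall x, clos_refl_trans V (fun a b => True /\ True /\ hub_adj h E a b) x h.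
  move=> x; case: (classic (x = h)) => [->|neq]; first exact: rt_refl.
  by apply: rt_step; split => //; split => //; split => //; right; left.
move=> x y _ _; apply: rt_trans (toh x) _.
case: (classic (y = h)) => [->|neq]; first exact: rt_refl.
by apply: rt_step; split => //; split => //; split => //; [move=> e; apply: neq | left].
Qed.

Unset Implicit Arguments.

Definition WO (K : Type) (le : K -> K -> Prop) : Prop :=
  (forall x, le x x) /\ (forall x y, le x y -> le y x -> x = y) /\
  (forall x y z, le x y -> le y z -> le x z) /\ (forall x y, le x y \/ le y x) /\
  (forall P : K -> Prop, (exists x, P x) -> exists m, P m /\ forall y, P y -> le m y).

Arguments WO {K}.
Definition sltof {K : Type} (le : K -> K -> Prop) (x y : K) := le x y /\ x <> y.

Section WOK.
Set Implicit Arguments.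
Variable K : Type.
Variable le : K -> K -> Prop.
Hypothesis HWO : WO le.
Local Notation lt := (sltof le).

Lemma le_refl x : le x x. Proof. by case: HWO => H _; apply: H. Qed.
Lemma le_anti x y : le x y -> le y x -> x = y. Proof. by case: HWO => _ [H _]; apply: H. Qed.
Lemma le_trans x y z : le x y -> le y z -> le x z. Proof. by case: HWO => _ [_ [H _]]; apply: H. Qed.
Lemma le_total x y : le x y \/ le y x. Proof. by case: HWO => _ [_ [_ [H _]]]; apply: H. Qed.
Lemma min_ex (P : K -> Prop) : (exists x, P x) -> exists m, P m /\ forall y, P y -> le m y.
Proof. by case: HWO => _ [_ [_ [_ H]]]; apply: H. Qed.

Lemma not_le_lt x y : ~ le x y -> lt y x.
Proof.
move=> H; case: (le_total x y) => // H'; split => // e; apply: H; rewrite e; exact: le_refl.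
Qed.
Lemma lt_not_le x y : lt x y -> ~ le y x.
Proof. by move=> [H ne] H'; apply: ne; apply: le_anti. Qed.
Lemma lt_le_trans x y z : lt x y -> le y z -> lt x z.
Proof.
move=> [H ne] H'; split; first exact: le_trans H H'.
by move=> e; subst; apply: ne; apply: le_anti.
Qed.
Lemma le_lt_trans x y z : le x y -> lt y z -> lt x z.
Proof.
move=> H [H' ne]; split; first exact: le_trans H H'.
by move=> e; subst; apply: ne; apply: le_anti.
Qed.
Lemma lt_trichotomy x y : lt x y \/ x = y \/ lt y x.
Proof.
case: (classic (x = y)) => [->|ne]; first by right; left.
by case: (le_total x y) => H; [left|right;right]; split => // e; apply: ne.
Qed.

Lemma wf_lt : well_founded lt.
Proof.
move=> x; apply: NNPP => nacc.
have [m [Hm Hmin]] := min_ex (fun x => ~ Acc lt x) (ex_intro _ x nacc).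
apply: Hm; constructor => y Hy; apply: NNPP => ny.
exact: (lt_not_le Hy (Hmin y ny)).
Qed.

Definition least (P : K -> Prop) (d : K) : K :=
  match excluded_middle_informative (exists x, P x) with
  | left H => proj1_sig (constructive_indefinite_description _ (min_ex P H))
  | right _ => d end.

Lemma least_spec P d : (exists x, P x) -> P (least P d) /\ forall y, P y -> le (least P d) y.
Proof.
move=> H; rewrite /least; case: excluded_middle_informative => // H'.
by case: constructive_indefinite_description.
Qed.

Hypothesis Hmint : forall z, ~ le_card K {x | lt x z}.

Section Collapse.
Variable nu : Type.
Variable f : nu -> K.
Hypothesis finj : forall a b, f a = f b -> a = b.
Let S t := exists a, f a = t.

Let F (x : K) (rec : forall y, lt y x -> K) : K :=
  least (fun w => ~ exists t (H : lt t x), S t /\ rec t H = w) x.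

Let r := Fix wf_lt (fun _ => K) F.

Let req x : r x = least (fun w => ~ exists t (H : lt t x), S t /\ r t = w) x.
Proof.
rewrite /r Fix_eq //.
move=> y g1 g2 Hg; rewrite /F.
have -> : g1 = g2 by apply: functional_extensionality_dep => t; apply: functional_extensionality_dep => H; apply: Hg.
done.
Qed.

Let rspec x : (~ exists t (H : lt t x), S t /\ r t = r x) /\
   forall w, (~ exists t (H : lt t x), S t /\ r t = w) -> le (r x) w.
Proof.
rewrite req; apply: least_spec.
apply: NNPP => Hall.
apply: (@Hmint x).
have Hc : forall w, exists t, lt t x /\ r t = w.
  move=> w; apply: NNPP => nw; apply: Hall; exists w => [[t [H [_ E]]]].
  by apply: nw; exists t.
exists (fun w => exist _ (proj1_sig (constructive_indefinite_description _ (Hc w)))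
                       (proj1 (proj2_sig (constructive_indefinite_description _ (Hc w))))).
move=> a b E; have E' := f_equal (@proj1_sig _ _) E; simpl in E'.
have Ea := proj2 (proj2_sig (constructive_indefinite_description _ (Hc a))).
have Eb := proj2 (proj2_sig (constructive_indefinite_description _ (Hc b))).
by rewrite -Ea -Eb E'.
Qed.

Let rinj s t : S s -> S t -> r s = r t -> s = t.
Proof.
move=> Ss St E.
case: (lt_trichotomy s t) => [H|[//|H]].
- case: (rspec t) => H1 _; case: H1; exists s; exists H; by split.
- case: (rspec s) => H1 _; case: H1; exists t; exists H; by split.
Qed.

Lemma collapse_main : (forall z, ~ le_card nu {x | lt x z}) -> le_card K nu.
Proof.
move=> Hnz.
have Hsurj : forall w, exists s, S s /\ r s = w.
  move=> w; apply: NNPP => nw.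
  have Hb : forall s, S s -> lt (r s) w.
    move=> s Ss; apply: not_le_lt => Hle.
    case: (lt_trichotomy w (r s)) => [Hlt|[E|Hlt]].
    - case: (classic (exists t (H : lt t s), S t /\ r t = w)) => [[t [_ [St E]]]|nI].
      + by apply: nw; exists t.
      + exact: (lt_not_le Hlt (proj2 (rspec s) w nI)).
    - by apply: nw; exists s.
    - exact: (lt_not_le Hlt Hle).
  apply: (Hnz w).
  exists (fun a => exist _ (r (f a)) (Hb (f a) (ex_intro _ a erefl))).
  move=> a b E; have E' := f_equal (@proj1_sig _ _) E; simpl in E'.
  apply: finj; apply: rinj => //; [exists a | exists b] => //.
have Hc : forall w, exists a, r (f a) = w.
  move=> w; have [s [[a Ea] Es]] := Hsurj w; exists a; by rewrite Ea.
exists (fun w => proj1_sig (constructive_indefinite_description _ (Hc w))).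
move=> a b E.
have Ea := proj2_sig (constructive_indefinite_description _ (Hc a)).
have Eb := proj2_sig (constructive_indefinite_description _ (Hc b)).
by rewrite -Ea -Eb E.
Qed.

End Collapse.

Lemma claimC (nu : Type) : lt_card nu K -> exists z, le_card nu {x | lt x z}.
Proof.
move=> [[f finj] nK]; apply: NNPP => H; apply: nK; apply: (@collapse_main nu f finj).
by move=> z Hz; apply: H; exists z.
Qed.

End WOK.
Arguments le_anti {K le} HWO {x y}.
Arguments le_trans {K le} HWO {x y z}.
Arguments not_le_lt {K le} HWO {x y}.
Arguments lt_le_trans {K le} HWO {x y z}.
Arguments le_lt_trans {K le} HWO {x y z}.

Lemma nlt_le {K} {le : K -> K -> Prop} (HWO : WO le) x y : ~ sltof le x y -> le y x.
Proof.
move=> H; case: (lt_trichotomy HWO x y) => [//|[->|[]//]]; exact: le_refl.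
Qed.

Lemma sum_le A A' B B' : le_card A A' -> le_card B B' -> le_card (A + B) (A' + B').
Proof.
move=> [f fi] [g gi]; exists (fun s => match s with inl a => inl (f a) | inr b => inr (g b) end).
by move=> [a|b] [a'|b'] // [E]; rewrite (fi _ _ E) || rewrite (gi _ _ E).
Qed.

Lemma seg_option {K} (P : K -> Prop) (a : K) (Q : K -> Prop) (H : forall x, P x -> x <> a -> Q x) :
  le_card {x | P x} (option {x | Q x}).
Proof.
exists (fun p => match excluded_middle_informative (proj1_sig p = a) with
  | left _ => None | right ne => Some (exist _ (proj1_sig p) (H _ (proj2_sig p) ne)) end).
move=> [x px] [y py] /=.
case: excluded_middle_informative => [ex|nx]; case: excluded_middle_informative => [ey|ny] //.
- by move=> _; apply: sig_eq => /=; rewrite ex ey.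
- by move=> [E]; apply: sig_eq.
Qed.

Lemma wo_min (K : Type) (le0 : K -> K -> Prop) (H0 : WO le0) :
  exists le : K -> K -> Prop, WO le /\ forall z, ~ le_card K {x | sltof le x z}.
Proof.
case: (classic (exists z, le_card K {x | sltof le0 x z})) => [Hex|Hn]; last first.
  by exists le0; split => // z Hz; apply: Hn; exists z.
have [z0 [[f finj] Hmin]] := min_ex H0 (fun z => le_card K {x | sltof le0 x z}) Hex.
pose le x y := le0 (proj1_sig (f x)) (proj1_sig (f y)).
have fi : forall x y, proj1_sig (f x) = proj1_sig (f y) -> x = y.
  by move=> x y E; apply: finj; apply: sig_eq.
have HW : WO le.
  rewrite /WO; split; first by move=> x; apply: (le_refl H0).
  split; first by move=> x y H1 H2; apply: fi; exact (le_anti H0 H1 H2).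
  split; first by move=> x y z H1 H2; exact (le_trans H0 H1 H2).
  split; first by move=> x y; exact (le_total H0 _ _).
  move=> P [x Px].
  have [m [[xm [Pxm Exm]] Hm]] := min_ex H0 (fun w => exists x, P x /\ proj1_sig (f x) = w) (ex_intro _ _ (ex_intro _ x (conj Px erefl))).
  exists xm; split => // y Py; rewrite /le Exm; apply: Hm; by exists y.
exists le; split => // y Hy.
have Hfy : sltof le0 (proj1_sig (f y)) z0 := proj2_sig (f y).
apply: (lt_not_le H0 Hfy); apply: Hmin.
apply: le_card_trans Hy _.
exists (fun p => exist (fun w => sltof le0 w (proj1_sig (f y))) (proj1_sig (f (proj1_sig p)))
   (conj (proj1 (proj2_sig p)) (fun e => proj2 (proj2_sig p) (fi _ _ e)))).
move=> [a pa] [b pb] [E]; apply: sig_eq => /=; exact: fi.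
Qed.

Unset Implicit Arguments.

Section Double.
Set Implicit Arguments.
Variable K : Type.
Variable le : K -> K -> Prop.
Hypothesis HWO : WO le.
Local Notation lt := (sltof le).

Variable c : K.
Hypothesis Hlimc : forall a, lt a c -> exists b, lt a b /\ lt b c.

Let succ (a : K) : K := least HWO (fun b => lt a b) a.

Let succ_spec a : lt a c -> lt a (succ a) /\ lt (succ a) c /\ forall b, lt a b -> le (succ a) b.
Proof.
move=> ac; have [b [ab bc]] := Hlimc ac.
have [H1 H2] := least_spec HWO (fun b => lt a b) a (ex_intro _ b ab).
split => //; split. rewrite /succ. have HH := le_lt_trans HWO (H2 b ab) bc. exact HH.
exact: H2.
Qed.

Let succ_inj a a' : lt a c -> lt a' c -> succ a = succ a' -> a = a'.
Proof.
move=> ac a'c E.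
have [H1 [H2 H3]] := succ_spec ac.
have [H1' [H2' H3']] := succ_spec a'c.
case: (lt_trichotomy HWO a a') => [H|[//|H]].
- have := H3 _ H; rewrite E => H'; case: (lt_not_le HWO H1' H').
- have := H3' _ H; rewrite -E => H'; case: (lt_not_le HWO H1 H').
Qed.

Let nonsucc (l : K) := forall b, lt b l -> succ b <> l.

Let iter_lt n l : lt l c -> lt (Nat.iter n succ l) c.
Proof. move=> H; elim: n => [|n IH] //=; exact: (proj1 (proj2 (succ_spec IH))). Qed.

Let decomp a : lt a c -> exists q : K * nat, lt q.1 c /\ nonsucc q.1 /\ Nat.iter q.2 succ q.1 = a.
Proof.
elim/(well_founded_ind (wf_lt HWO)): a => a IH ac.
case: (classic (nonsucc a)) => [ns|ns].
  by exists (a, 0).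
have [b [ba E]] : exists b, lt b a /\ succ b = a.
  apply: NNPP => H; apply: ns => b ba E; apply: H; by exists b.
have bc : lt b c.
  by case: ba => ba _; exact (le_lt_trans HWO ba ac).
have [[l n] [lc [nsl El]]] := IH b ba bc.
exists (l, S n); split => //; split => //=.
by simpl in El; rewrite El.
Qed.

Let uniq n : forall m l l', lt l c -> lt l' c -> nonsucc l -> nonsucc l' ->
  Nat.iter n succ l = Nat.iter m succ l' -> n = m /\ l = l'.
Proof.
elim: n => [|n IH] [|m] l l' lc l'c nl nl' /= E.
- by [].
- exfalso; apply: (nl (Nat.iter m succ l')) => //.
  rewrite E; exact: (proj1 (succ_spec (iter_lt m l'c))).
- exfalso; apply: (nl' (Nat.iter n succ l)) => //.
  rewrite -E; exact: (proj1 (succ_spec (iter_lt n lc))).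
- have E' := succ_inj (iter_lt n lc) (iter_lt m l'c) E.
  have [-> ->] := IH m l l' lc l'c nl nl' E'; done.
Qed.

Let iter_add n m l : Nat.iter (n + m) succ l = Nat.iter n succ (Nat.iter m succ l).
Proof. elim: n => [|n IH] //=; by rewrite IH. Qed.

Lemma double_le : le_card ({x | lt x c} + {x | lt x c}) {x | lt x c}.
Proof.
pose dq (p : {x | lt x c}) := proj1_sig (constructive_indefinite_description _ (decomp (proj2_sig p))).
have dqP : forall p, lt (dq p).1 c /\ nonsucc (dq p).1 /\ Nat.iter (dq p).2 succ (dq p).1 = proj1_sig p.
  move=> p; rewrite /dq; exact: (proj2_sig (constructive_indefinite_description _ (decomp (proj2_sig p)))).
pose G (s : {x | lt x c} + {x | lt x c}) : {x | lt x c} :=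
  match s with
  | inl p => exist _ (Nat.iter ((dq p).2 + (dq p).2) succ (dq p).1) (iter_lt _ (proj1 (dqP p)))
  | inr p => exist _ (Nat.iter (S ((dq p).2 + (dq p).2)) succ (dq p).1) (iter_lt _ (proj1 (dqP p)))
  end.
exists G.
move=> [p|p] [p'|p'] E; have E' := f_equal (@proj1_sig _ _) E;
  have [c1 [n1 e1]] := dqP p; have [c2 [n2 e2]] := dqP p'.
- have [Hkk Hl] := @uniq ((dq p).2 + (dq p).2) ((dq p').2 + (dq p').2) _ _ c1 c2 n1 n2 E'.
  f_equal; apply: sig_eq; rewrite -e1 -e2 Hl; f_equal; lia.
- have [Hkk _] := @uniq ((dq p).2 + (dq p).2) (S ((dq p').2 + (dq p').2)) _ _ c1 c2 n1 n2 E'.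
  lia.
- have [Hkk _] := @uniq (S ((dq p).2 + (dq p).2)) ((dq p').2 + (dq p').2) _ _ c1 c2 n1 n2 E'.
  lia.
- have [Hkk Hl] := @uniq (S ((dq p).2 + (dq p).2)) (S ((dq p').2 + (dq p').2)) _ _ c1 c2 n1 n2 E'.
  f_equal; apply: sig_eq; rewrite -e1 -e2 Hl; f_equal; lia.
Qed.
End Double.

Unset Implicit Arguments.

Section Uncountable.
Variable K : Type.
Variable le : K -> K -> Prop.
Hypothesis HWO : WO le.
Local Notation lt := (sltof le).
Hypothesis Hmint : forall z, ~ le_card K {x | lt x z}.
Hypothesis Hinf : le_card nat K.
Hypothesis Hun : ~ le_card K nat.
Hypothesis Hlim : limit_card K.

Let D z := forall y, lt y z -> ~ le_card {x | lt x z} {x | lt x y}.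
Let E x y := forall c, D c -> (le c x <-> le c y).

Let unb x : exists c, D c /\ lt x c.
Proof.
have Hl : lt_card {y | lt y x} K := conj (le_card_sig _ _) (Hmint x).
have [nu1 [[H1a H1b] H2]] := Hlim _ Hl.
have [w Hw] := claimC HWO Hmint H2.
have [c [Hc Hmin]] := min_ex HWO (fun z => le_card nu1 {y | lt y z}) (ex_intro _ w Hw).
exists c; split.
- move=> y yc Hle; apply: (lt_not_le HWO yc); apply: Hmin; exact: le_card_trans Hc Hle.
- apply: (not_le_lt HWO) => Hcx; apply: H1b; apply: le_card_trans Hc (le_card_sub _).
  move=> y Hy; exact (lt_le_trans HWO Hy Hcx).
Qed.

Let Erefl x : E x x. Proof. by move=> c _. Qed.
Let Esym x y : E x y -> E y x. Proof. by move=> H c Dc; split => /(H c Dc). Qed.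
Let Etr x y z : E x y -> E y z -> E x z.
Proof. by move=> H1 H2 c Dc; split => [/(H1 c Dc)/(H2 c Dc)|/(H2 c Dc)/(H1 c Dc)]. Qed.

Let small x : ~ le_card K {y | E x y}.
Proof.
have [c [Dc xc]] := unb x => H; apply: (Hmint c); apply: le_card_trans H (le_card_sub _).
move=> y Exy; apply: NNPP => nyc; have := nlt_le HWO nyc => cy.
exact: (lt_not_le HWO xc (proj2 (Exy c Dc) cy)).
Qed.

Lemma uncountable_case : exists (V : Type) (adj : V -> V -> Prop),
    is_graph adj /\ connected adj /\ same_card V K /\
    chromatic_number_is adj K /\ ~ is_minor (complete_adj K) adj.
Proof.
have [g ginj] := Hinf.
exists K, (hub_adj (g 0) E).
split; first exact: hub_graph.
split; first exact: hub_connected.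
split; first by exists id, id.
split; last exact: (no_minor K K Hinf (g 0) E Erefl Etr small).
split.
  by exists id => u v [].
move=> mu [Hmu1 Hmu2] [col Hcol].
have [nu [[Hmn1 Hmn2] Hnu]] := Hlim _ (conj Hmu1 Hmu2).
have [z0 Hz0] := claimC HWO Hmint Hnu.
have [z1 Hz1] := claimC HWO Hmint (conj Hinf Hun : lt_card nat K).
have [m [zm0 zm1]] : exists m, le z0 m /\ le z1 m.
  case: (le_total HWO z0 z1) => H; [exists z1 | exists z0]; split => //; exact: le_refl.
have [c [Dc mc]] := unb m.
have [c' [[Dc' cc'] Hc'min]] := min_ex HWO (fun d => D d /\ lt c d) (unb c).
have Hlimc : forall a, lt a c -> exists b, lt a b /\ lt b c.
  move=> a ac; apply: NNPP => Hnb.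
  case: (classic (lt a m)) => am; first by apply: Hnb; exists m.
  have ma := nlt_le HWO am.
  have Hnat : le_card nat {x | lt x a}.
    apply: le_card_trans Hz1 (le_card_sub _) => x xz1.
    exact (lt_le_trans HWO xz1 (le_trans HWO zm1 ma)).
  apply: (Dc a ac).
  apply: le_card_trans (option_le Hnat).
  apply: seg_option => x xc xa; apply: NNPP => nxa.
  apply: Hnb; exists x; split => //.
  have := nlt_le HWO nxa => ax; split => // e; apply: xa; symmetry; exact e.
have Hdbl := double_le HWO Hlimc.
pose B := {y | le c y /\ lt y c'}.
have HBmu : le_card B mu.
  exists (fun p => col (proj1_sig p)).
  move=> [x [cx xc']] [y [cy yc']] /= Ecol; apply: sig_eq => /=; apply: NNPP => nxy.
  apply: (Hcol x y _ Ecol); split => //; right; right.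
  have side : forall u v, le c v -> lt u c' -> forall d, D d -> le d u -> le d v.
    move=> u v cv uc' d Dd du.
    have dc' := le_lt_trans HWO du uc'.
    have dc : le d c.
      apply: NNPP => ndc; have cd := not_le_lt HWO ndc.
      exact: (lt_not_le HWO dc' (Hc'min d (conj Dd cd))).
    exact (le_trans HWO dc cv).
  move=> d Dd; split; [exact: side cy xc' d Dd | exact: side cx yc' d Dd].
have HBc : le_card B {x | lt x c}.
  apply: le_card_trans HBmu _; apply: le_card_trans Hmn1 _; apply: le_card_trans Hz0 _.
  apply: le_card_sub => x xz0; exact (lt_le_trans HWO xz0 (le_trans HWO zm0 (proj1 mc))).
apply: (Dc' c cc').
apply: le_card_trans _ Hdbl.
apply: le_card_trans _ (sum_le (le_card_refl _) HBc).
exists (fun p => match excluded_middle_informative (lt (proj1_sig p) c) with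
  | left H => inl (exist _ (proj1_sig p) H)
  | right H => inr (exist (fun y => le c y /\ lt y c') (proj1_sig p) (conj (nlt_le HWO H) (proj2_sig p))) end).
move=> [x px] [y py] /=.
case: excluded_middle_informative => Hx; case: excluded_middle_informative => Hy //= [e];
  by apply: sig_eq.
Qed.

End Uncountable.

Unset Implicit Arguments.

Lemma nat_not_fin (N : nat) : ~ le_card nat {y : nat | y < N}.
Proof.
move=> [f finj].
have H := NoDup_incl_length (l := map (fun i => proj1_sig (f i)) (seq 0 (S N))) (l' := seq 0 N).
rewrite length_map !length_seq in H.
have : S N <= N; last lia.
apply: H.
- apply: NoDup_map_NoDup_ForallPairs; last exact: seq_NoDup.
  by move=> a b _ _ E; apply: finj; apply: sig_eq.
- move=> x /in_map_iff [i [<- _]]; apply/in_seq; have := proj2_sig (f i); simpl; lia.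
Qed.

Lemma fin_to_nat (A : Type) : (forall k, exists l : list A, NoDup l /\ k <= length l) -> le_card nat A.
Proof.
move=> Hk.
have ex : forall l : list A, exists x, ~ In x l.
  move=> l; apply: NNPP => Hn.
  have [l' [nd len]] := Hk (S (length l)).
  have : length l' <= length l; last lia.
  apply: NoDup_incl_length nd _ => x _; apply: NNPP => nx; apply: Hn; by exists x.
pose pick l := proj1_sig (constructive_indefinite_description _ (ex l)).
have pickP : forall l, ~ In (pick l) l.
  move=> l; exact: (proj2_sig (constructive_indefinite_description _ (ex l))).
pose h := fix h n := match n with 0 => nil | S n => pick (h n) :: h n end.
have mono : forall a b x, a <= b -> In x (h a) -> In x (h b).
  move=> a b x ab; elim: b ab => [|b IH] ab.
  - by have -> : a = 0 by lia.
  - case: (Nat.eq_dec a (S b)) => [->//|ne] Hx; right; apply: IH => //; lia.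
exists (fun n => pick (h n)).
have key : forall m n, m < n -> pick (h m) <> pick (h n).
  move=> m n mn E; apply: (pickP (h n)); rewrite -E; apply: (mono (S m)); first lia.
  by left.
move=> m n E; case: (Nat.lt_trichotomy m n) => [H|[//|H]].
- by case: (key _ _ H E).
- by case: (key _ _ H (eq_sym E)).
Qed.

Definition blk (x y : nat) : Prop := Nat.log2 (S x) = Nat.log2 (S y).

Lemma blk_small (K : Type) (Hinf : le_card nat K) x : ~ le_card K {y | blk x y}.
Proof.
move=> H; apply: (nat_not_fin (2 ^ S (Nat.log2 (S x)))).
apply: le_card_trans Hinf (le_card_trans H (le_card_sub _)).
move=> y; rewrite /blk => ->; have := Nat.log2_spec (S y); lia.
Qed.

Lemma blk_big (k : nat) : exists l, NoDup l /\ k <= length l /\ forall x y, In x l -> In y l -> blk x y.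
Proof.
have Hp : 1 <= 2 ^ k by apply: Nat.pow_le_mono_r_iff || (have := Nat.pow_gt_lin_r 2 k; lia).
exists (seq (2 ^ k - 1) (2 ^ k)); split; first exact: seq_NoDup.
split; first by rewrite length_seq; have := Nat.pow_gt_lin_r 2 k; lia.
have L : forall x, In x (seq (2 ^ k - 1) (2 ^ k)) -> Nat.log2 (S x) = k.
  move=> x /in_seq Hx; apply: Nat.log2_unique; first lia.
  rewrite Nat.pow_succ_r'; lia.
by move=> x y /L Ex /L Ey; rewrite /blk Ex Ey.
Qed.

Module WOX.
Import ssrnat eqtype choice boolp wochoice.
Lemma wo_exists (K : Type) : exists le : K -> K -> Prop, WO le.
Proof.
have [R HR] := @well_ordering_principle {classic K}.
have inP : forall (P : K -> Prop) (x : {classic K}), (x \in (fun z : {classic K} => `[< P z >])) <-> P x.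
  by move=> P x; split => [/asboolP|?]//; apply/asboolP.
have Hmin : forall P : K -> Prop, (exists x, P x) -> exists m, P m /\ forall y, P y -> R m y.
  move=> P [x Px].
  have [|m [[Am lb] _]] := HR (fun x : {classic K} => `[< P x >]).
    by exists x; apply/inP.
  exists m; split; first by apply/inP.
  by move=> y Py; apply: lb; apply/inP.
have Htot : forall x y, R x y \/ R y x.
  move=> x y; have [m [[->|->] H]] := Hmin (fun z => z = x \/ z = y) (ex_intro _ x (or_introl erefl)).
  - by left; apply: H; right.
  - by right; apply: H; left.
have Hrefl : forall x, R x x by move=> x; case: (Htot x x).
have Hanti : forall x y, R x y -> R y x -> x = y.
  move=> x y Rxy Ryx.
  have [|z [_ U]] := HR (fun z : {classic K} => `[< z = x \/ z = y >]).
    by exists x; apply/inP; left.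
  have ex : z = x.
    apply: U; split; first by apply/inP; left.
    by move=> w /inP [->|->].
  have ey : z = y.
    apply: U; split; first by apply/inP; right.
    by move=> w /inP [->|->].
  by rewrite -ex -ey.
have Htr : forall x y z, R x y -> R y z -> R x z.
  move=> x y z Rxy Ryz; case: (Htot x z) => // Rzx.
  have [m [Hm H]] := Hmin (fun w => w = x \/ w = y \/ w = z) (ex_intro _ x (or_introl erefl)).
  case: Hm => [Em|[Em|Em]]; subst m.
  - by apply: H; right; right.
  - have := Hanti _ _ Rxy (H x (or_introl erefl)) => ->; done.
  - have eyz := Hanti _ _ Ryz (H y (or_intror (or_introl erefl))).
    by rewrite -eyz.
exists (fun x y => R x y); split=> //; split=> //; split=> //; split=> //.
Qed.
End WOX.

Module SBX.
Import ssrnat eqtype choice boolp classical_sets cardinality.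
Local Open Scope card_scope.
Local Open Scope classical_set_scope.
Lemma nat_same (K : Type) (f : nat -> K) (finj : forall x y, f x = f y -> x = y)
  (g : K -> nat) (ginj : forall x y, g x = g y -> x = y) : same_card nat K.
Proof.
have H1 : [set: K] #<= [set: nat].
  apply/pcard_injP; exists g => x y _ _; exact: ginj.
have H2 : [set: nat] #<= [set: K].
  have E : f @` [set: nat] #= [set: nat] by apply: inj_card_eq => x y _ _; exact: finj.
  rewrite -(card_le_eql E).
  exact: subset_card_le.
have /card_bijP [F [G FG GF]] := Cantor_Bernstein H2 H1.
pose inN (n : nat) : [set: nat] := exist _ n (mem_set (I : [set: nat] n)).
pose inK (k : K) : [set: K] := exist _ k (mem_set (I : [set: K] k)).
exists (fun n => val (F (inN n))), (fun k => val (G (inK k))).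
split.
- move=> n; rewrite /inK.
  have -> : exist _ (val (F (inN n))) (mem_set (I : [set: K] (val (F (inN n))))) = F (inN n).
    by apply: val_inj.
  by rewrite FG.
- move=> k; rewrite /inN.
  have -> : exist _ (val (G (inK k))) (mem_set (I : [set: nat] (val (G (inK k))))) = G (inK k).
    by apply: val_inj.
  by rewrite GF.
Qed.

End SBX.

Lemma countable_case (K : Type) (Hinf : le_card nat K) (Hc : le_card K nat) :
  exists (V : Type) (adj : V -> V -> Prop),
    is_graph adj /\ connected adj /\ same_card V K /\
    chromatic_number_is adj K /\ ~ is_minor (complete_adj K) adj.
Proof.
have [f finj] := Hinf; have [g ginj] := Hc.
exists nat, (hub_adj 0 blk).
split; first by apply: hub_graph => x y; apply: eq_sym.
split; first exact: hub_connected.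
split; first exact: (SBX.nat_same K f finj g ginj).
split; last first.
  apply: (no_minor K nat Hinf 0 blk) => //.
  - by move=> x y z; apply: eq_trans.
  - exact: blk_small.
split; first by exists f => u v [neq _] /finj.
move=> mu [Hmu1 Hmu2] [col Hcol]; apply: Hmu2.
apply: (le_card_trans Hc); apply: fin_to_nat => k.
have [l [nd [len Hb]]] := blk_big k.
exists (map col l); split; last by rewrite length_map.
apply: NoDup_map_NoDup_ForallPairs => // a b Ha Hb' E.
apply: NNPP => ne; apply: (Hcol a b _ E); split => //; right; right; exact: Hb.
Qed.

Unset Implicit Arguments.

Theorem mainTheorem1 (K : Type) (Hinf : infinite_card K) (Hlim : limit_card K) :
  exists (V : Type) (adj : V -> V -> Prop),
    is_graph adj /\ connected adj /\ same_card V K /\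
    chromatic_number_is adj K /\ ~ is_minor (complete_adj K) adj.
Proof.
have [le0 H0] := WOX.wo_exists K.
have [le [HWO Hmint]] := wo_min H0.
case: (classic (le_card K nat)) => Hc.
- exact: countable_case Hinf Hc.
- exact: uncountable_case HWO Hmint Hinf Hc Hlim.
Qed.
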